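(* Let $(X,\|\cdot\|)$ be a normed linear space, let $I$ be a non-trivial admissible ideal in $\mathbb{N}$, let $x=\{x_k\}_{k\in\mathbb{N}}$ be a sequence in $X$ and let $r>0$. Then the set $I\text{-}st\text{-}\mathrm{LIM}_x^r$ is closed in $X$.
   Context: An ideal $I$ in $\mathbb{N}$ is a family of subsets of $\mathbb{N}$ containing $\emptyset$, closed under finite unions and under taking subsets; it is non-trivial if $\mathbb{N}\notin I$ and admissible if $\{n\}\in I$ for every $n$. For $r\ge0$, $x$ is $r$-$I$-statistically convergent to $\xi\in X$ if for every $\varepsilon>0$ and $\delta>0$, $\{n\in\mathbb{N}:\frac1n|\{k\le n:\|x_k-\xi\|\ge r+\varepsilon\}|\ge\delta\}\in I$; $I\text{-}st\text{-}\mathrm{LIM}_x^r$ is the set of all such $\xi$. *)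

(* Defs.v *)
From HB Require Import structures.
From mathcomp Require Import all_boot all_order all_algebra.
From mathcomp Require Import all_classical all_reals all_analysis.
Set Implicit Arguments. Unset Strict Implicit. Unset Printing Implicit Defensive.
Import Order.TTheory GRing.Theory Num.Theory.
Import numFieldNormedType.Exports.
Local Open Scope classical_set_scope.
Local Open Scope ring_scope.

Definition is_ideal (I : set (set nat)) : Prop :=
  I set0 /\
  (forall A B, I A -> I B -> I (A `|` B)) /\
  (forall A B, B `<=` A -> I A -> I B).

Definition nontrivial_ideal (I : set (set nat)) : Prop := ~ I setT.

Definition admissible_ideal (I : set (set nat)) : Prop :=
  forall n : nat, I [set n].

Definition stat_count {R : realType} {X : normedModType R}
  (x : nat -> X) (xi : X) (r eps : R) (n : nat) : nat :=
  #|[set k : 'I_n.+1 | (0 < val k)%N && (r + eps <= `|x k - xi|) ]|.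

Definition rI_stat_conv {R : realType} {X : normedModType R}
  (I : set (set nat)) (x : nat -> X) (r : R) (xi : X) : Prop :=
  forall eps delta : R, 0 < eps -> 0 < delta ->
    I [set n : nat | (0 < n)%N /\
        delta <= (n%:R)^-1 * (stat_count x xi r eps n)%:R].

Definition I_st_LIM {R : realType} {X : normedModType R}
  (I : set (set nat)) (x : nat -> X) (r : R) : set X :=
  [set xi | rI_stat_conv I x r xi].

(* Main.v *)
Require Import Defs.
From HB Require Import structures.
From mathcomp Require Import all_boot all_order all_algebra.
From mathcomp Require Import all_classical all_reals all_analysis.
Import Order.TTheory GRing.Theory Num.Theory.
Import numFieldNormedType.Exports.
Local Open Scope classical_set_scope.
Local Open Scope ring_scope.

Theorem theorem3p3 (R : realType) (X : normedModType R)
  (I : set (set nat)) (x : nat -> X) (r : R) :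
  is_ideal I -> nontrivial_ideal I -> admissible_ideal I -> 0 < r ->
  closed (I_st_LIM I x r).
Proof.
move=> [_ [_ Isub]] _ _ _ y cly eps delta e0 d0.
have e2 : 0 < eps / 2 by rewrite divr_gt0.
have [xi [Hxi Hb]] := cly _ (nbhsx_ballx y (eps / 2) e2).
move: Hb; rewrite -ball_normE /= => Hb.
apply: (Isub _ _ _ (Hxi (eps / 2) delta e2 d0)).
move=> n /= [n0 Hn]; split => //.
apply: (le_trans Hn); apply: ler_wpM2l; first by rewrite invr_ge0 ler0n.
rewrite ler_nat; apply: subset_leq_card; apply/fintype.subsetP => k.
rewrite inE => /andP [k0 Hk]; rewrite inE; apply/andP; split; first exact: k0.
have T : `|x k - y| <= `|x k - xi| + `|xi - y|.
  by have := ler_normD (x k - xi) (xi - y); rewrite addrA subrK.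
rewrite distrC in Hb.
have : r + eps <= `|x k - xi| + eps / 2.
  apply: (le_trans Hk); apply: (le_trans T); rewrite lerD2l; exact: ltW.
move=> H; rewrite -(lerD2r (eps / 2)); apply: le_trans H.
by rewrite -addrA -splitr.
Qed.
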